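(* Let $\ell\ge1$ and $N$ be integers and let $f:\binom{[N]}{2}\to\binom{[N]}{\ell}$ satisfy $f(e)\cap e=\emptyset$ for all $e\in\binom{[N]}{2}$. Let $X\subseteq[N]$ be the set of $x\in[N]$ such that $x\in f(e)$ for at most $\ell N$ pairs $e\in\binom{[N]}{2}$. Let $G$ be a graph with $n$ vertices and $m$ edges, where $m$ is a perfect square, $n/\sqrt m=2^T$ for a positive integer $T$, and fewer than $n/2$ vertices of $G$ are isolated. Let $u_1,\dots,u_n$, $\prec$, $U_0,\dots,U_T$ and the Embedding Algorithm be as described in the context. Suppose $X_0',\dots,X_T'\subseteq X$ are pairwise disjoint sets satisfying properties (P1), (P2), (P3) of the context. Then there are subsets $X_j\subseteq X_j'$, $0\le j\le T$, such that the Embedding Algorithm with input $t=T$ and $X_0,\dots,X_T$ does not fail and returns an injection $\varphi:V(G)\to X$ satisfying $f(\{\varphi(v),\varphi(u)\})\cap\varphi(V(G))=\emptyset$ for every edge $vu\in E(G)$.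
   Context: Setup. $[N]=\{1,\dots,N\}$, $\binom{[N]}{k}$ is the family of $k$-subsets. Order $V(G)$ as $u_1,\dots,u_n$ with $d(u_1)\ge\dots\ge d(u_n)$ (degrees in $G$), and write $u_i\prec u_j$ iff $i<j$. Let $U_0=\{u_i:1\le i\le\sqrt m\}$ and for $1\le j\le T$ let $U_j=\{u_i:\sqrt m\,2^{j-1}<i\le\sqrt m\,2^j\}$. For sets $A_0,\dots,A_T$ write $A_{\le j}=A_0\cup\dots\cup A_j$. Embedding Algorithm. Input: $t\in\{0,\dots,T\}$ and pairwise disjoint $X_0,\dots,X_t\subseteq X$. Go over $j=0,\dots,t$ in order, and for each $j$ over the vertices $u\in U_j$ in the order $\prec$. For such $u$, let $X_u$ be the set of $x\in X_j$ such that: (a) $x\ne\varphi(v)$ for every $v\prec u$; (b) $x\notin f(\{\varphi(v),\varphi(w)\})$ for every edge $vw\in E(G)$ with $v,w\in U_0\cup\dots\cup U_{j-1}$; (c) for every neighbour $v$ of $u$ with $v\prec u$, $f(\{\varphi(v),x\})\cap X_{\le j}=\emptyset$. If $X_u=\emptyset$, stop and report failure; otherwise set $\varphi(u)$ to be the smallest element of $X_u$ (in the natural order of $[N]$). If it does not fail, the output is the map $\varphi:U_{\le t}\to X_{\le t}$. Properties of disjoint sets $X_0',\dots,X_T'\subseteq X$: (P1) $3.9|U_j|<|X_j'|<4.1|U_j|$ for all $0\le j\le T$. (P2) For each $j\in\{0,\dots,T-1\}$ and every choice of subsets $X_i\subseteq X_i'$ ($0\le i\le j$), if the Embedding Algorithm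 with input $t=j$ and $X_0,\dots,X_j$ does not fail and outputs $\varphi$, then the set $L=\bigcup f(\{\varphi(v),\varphi(u)\})$, the union over all edges $vu\in E(G)$ with $v,u\in U_{\le j}$, satisfies $|L\cap X_{j+1}'|\le|X_{j+1}'|/9$. (P3) For all $0\le i\le j\le T$, the number $r_{i,j}$ of pairs of distinct vertices $(x,y)\in X_i'\times X_j'$ with $f(\{x,y\})\cap X'_{\le j}\neq\emptyset$ satisfies $r_{i,j}\le|U_i||U_j|^2/(5m)$. *)

(* Defs.v *)
From mathcomp Require Import all_boot.
Set Implicit Arguments. Unset Strict Implicit. Unset Printing Implicit Defensive.

(* Vertex indices are 0-based: u i for i : 'I_n stands for u_{i+1} of the paper.
   Elements of [N] are represented by 'I_N (order-preserving shift by one). *)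

(* i (0-based) is the index of a vertex of U_j, where s = sqrt m. *)
Definition inU (s j i : nat) : bool :=
  if j is j'.+1 then (s * 2 ^ j' <= i) && (i < s * 2 ^ j) else i < s.

Definition Uset (V : finType) (n : nat) (u : 'I_n -> V) (s j : nat) : {set V} :=
  [set v | [exists i : 'I_n, (u i == v) && inU s j i]].

Definition Ule (V : finType) (n : nat) (u : 'I_n -> V) (s j : nat) : {set V} :=
  \bigcup_(i < j.+1) Uset u s i.
Definition Ult (V : finType) (n : nat) (u : 'I_n -> V) (s j : nat) : {set V} :=
  \bigcup_(i < j) Uset u s i.

Definition prec (V : finType) (n : nat) (u : 'I_n -> V) (v w : V) : bool :=
  [exists i : 'I_n, exists k : 'I_n, [&& u i == v, u k == w & i < k]].

Definition Xle (N : nat) (Xs : nat -> {set 'I_N}) (j : nat) : {set 'I_N} :=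
  \bigcup_(i < j.+1) Xs i.

Definition deg (V : finType) (E : rel V) (v : V) : nat := #|[set w | E v w]|.

Definition edges (V : finType) (E : rel V) : {set {set V}} :=
  [set e : {set V} | [exists v, exists w, E v w && (e == [set v; w])]].

Definition Xgood (N l : nat) (f : {set 'I_N} -> {set 'I_N}) : {set 'I_N} :=
  [set x : 'I_N | #|[set e : {set 'I_N} | (#|e| == 2) && (x \in f e)]| <= l * N].

(* Conditions (a), (b), (c) for candidate x for vertex w in part j, given the
   partial embedding phi (None = not yet embedded). *)
Definition cand (N : nat) (V : finType) (n : nat) (u : 'I_n -> V) (E : rel V)
  (f : {set 'I_N} -> {set 'I_N}) (s : nat) (Xs : nat -> {set 'I_N}) (j : nat)
  (phi : V -> option 'I_N) (w : V) (x : 'I_N) : bool :=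
  [&& [forall v, prec u v w ==> (phi v != Some x)],
      [forall v, forall v',
         [&& E v v', v \in Ult u s j & v' \in Ult u s j] ==>
         match phi v, phi v' with
         | Some a, Some b => x \notin f [set a; b]
         | _, _ => true
         end] &
      [forall v, (E v w && prec u v w) ==>
         match phi v with
         | Some a => [disjoint f [set a; x] & Xle Xs j]
         | None => true
         end]].

Definition emb_step (N : nat) (V : finType) (n : nat) (u : 'I_n -> V) (E : rel V)
  (f : {set 'I_N} -> {set 'I_N}) (s : nat) (Xs : nat -> {set 'I_N}) (j : nat)
  (st : option (V -> option 'I_N)) (i : 'I_n) : option (V -> option 'I_N) :=
  if st is Some phi then
    let w := u i in
    match [seq x <- enum 'I_N | (x \in Xs j) && cand u E f s Xs j phi w x] with
    | [::] => None
    | x :: _ => Some (fun v => if v == w then Some x else phi v)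
    end
  else None.

(* The Embedding Algorithm with input t and X_0, ..., X_t (only Xs 0..t used).
   None = failure; Some phi = output (phi v = Some (image) for v in U_{<= t}). *)
Definition Emb (N : nat) (V : finType) (n : nat) (u : 'I_n -> V) (E : rel V)
  (f : {set 'I_N} -> {set 'I_N}) (s : nat) (Xs : nat -> {set 'I_N}) (t : nat)
  : option (V -> option 'I_N) :=
  foldl (fun st j => foldl (emb_step u E f s Xs j) st [seq i : 'I_n <- enum 'I_n | inU s j i])
        (Some (fun _ => None)) (iota 0 t.+1).

Definition Lset (N : nat) (V : finType) (n : nat) (u : 'I_n -> V) (E : rel V)
  (f : {set 'I_N} -> {set 'I_N}) (s : nat) (phi : V -> option 'I_N) (j : nat)
  : {set 'I_N} :=
  \bigcup_(v | v \in Ule u s j) \bigcup_(w | E v w && (w \in Ule u s j))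
     match phi v, phi w with
     | Some a, Some b => f [set a; b]
     | _, _ => set0
     end.

Definition rij (N : nat) (f : {set 'I_N} -> {set 'I_N}) (X' : nat -> {set 'I_N})
  (i j : nat) : nat :=
  #|[set p : 'I_N * 'I_N | [&& p.1 \in X' i, p.2 \in X' j, p.1 != p.2 &
       ~~ [disjoint f [set p.1; p.2] & Xle X' j]]]|.

(* Main.v *)
Require Import Defs.
From mathcomp Require Import all_boot.
From mathcomp Require Import zify.
Set Implicit Arguments. Unset Strict Implicit. Unset Printing Implicit Defensive.

Lemma card_bigcup_le (T I : finType) (P : pred I) (F : I -> {set T}) :
  #|\bigcup_(i | P i) F i| <= \sum_(i | P i) #|F i|.
Proof.
apply: (big_ind2 (fun (A : {set T}) (n : nat) => #|A| <= n)) => [|A1 n1 A2 n2 h1 h2|i _ //].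
  by rewrite cards0.
exact: leq_trans (leq_card_setU _ _).1 (leq_add h1 h2).
Qed.

Lemma card_pairs (T1 T2 : finType) (P : T1 -> T2 -> bool) :
  #|[set p : T1 * T2 | P p.1 p.2]| = \sum_(x : T1) #|[set y | P x y]|.
Proof.
rewrite -sum1_card big_mkcond /=.
rewrite (eq_bigr (fun p : T1 * T2 => (fun x y => if P x y then 1 else 0) p.1 p.2)); last first.
  by case=> x y _; rewrite inE.
rewrite -(pair_bigA _ (fun x y => if P x y then 1 else 0)) /=.
apply/esym/eq_bigr => x _; rewrite -sum1_card big_mkcond /=.
by apply: eq_bigr => y _; rewrite !inE.
Qed.

Definition lo (s j : nat) := if j is j'.+1 then s * 2 ^ j' else 0.
Definition hi (s j : nat) := s * 2 ^ j.

Lemma inUE s j i : inU s j i = (lo s j <= i) && (i < hi s j).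
Proof. by case: j => [|j] /=; rewrite /hi ?expn0 ?muln1. Qed.

Lemma lo_le_hi s j : lo s j <= hi s j.
Proof. case: j => [|j] //=; rewrite /hi expnS; apply: leq_mul => //; apply: leq_pmull => //. Qed.

Lemma hi_le_lo s j' j : j' < j -> hi s j' <= lo s j.
Proof.
case: j => [//|j] /= H; rewrite /hi; apply: leq_mul => //; apply: leq_pexp2l => //.
Qed.

Lemma inU_mono s j j' a b : inU s j a -> inU s j' b -> a <= b -> j <= j'.
Proof.
rewrite !inUE => /andP[h1 h2] /andP[h3 h4] hab.
case: (leqP j j') => // hlt.
have := hi_le_lo s hlt. lia.
Qed.

Lemma inU_uniq s j j' a : inU s j a -> inU s j' a -> j = j'.
Proof.
move=> h1 h2; apply/eqP; rewrite eqn_leq.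
by rewrite (inU_mono h1 h2 (leqnn _)) (inU_mono h2 h1 (leqnn _)).
Qed.

Lemma inU_ex s T k : k < s * 2 ^ T -> exists2 j, j <= T & inU s j k.
Proof.
elim: T => [|T IH] hk.
  by exists 0 => //; rewrite expn0 muln1 in hk.
case: (ltnP k (s * 2 ^ T)) => h.
  by have [j hj hu] := IH h; exists j => //; apply: leq_trans hj _.
by exists T.+1 => //; rewrite inUE /= h.
Qed.

Lemma filter_iota_int lo hi n : lo <= hi -> hi <= n ->
  [seq k <- iota 0 n | (lo <= k) && (k < hi)] = iota lo (hi - lo).
Proof.
move=> h1 h2.
have -> : n = lo + ((hi - lo) + (n - hi)) by lia.
rewrite iotaD iotaD filter_cat filter_cat add0n.
rewrite (eq_in_filter (a2 := pred0)); last first.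
  by move=> x; rewrite mem_iota /= => h; apply/negbTE; lia.
rewrite filter_pred0 /=.
rewrite (eq_in_filter (a2 := predT)); last first.
  by move=> x; rewrite mem_iota => /andP[a b]; rewrite /= a /=; lia.
rewrite filter_predT.
rewrite (eq_in_filter (a2 := pred0)); last first.
  by move=> x; rewrite mem_iota => /andP[a b] /=; apply/negbTE; lia.
by rewrite filter_pred0 cats0.
Qed.

Section Main.
Variables (l N : nat) (f : {set 'I_N} -> {set 'I_N}).
Variables (V : finType) (E : rel V) (hEsym : symmetric E) (hEirr : irreflexive E).
Variables (n m s T : nat).
Hypothesis (hm : #|edges E| = m) (hs : m = s * s) (hnT : n = s * 2 ^ T).
Variables (u : 'I_n -> V) (ui : V -> 'I_n).
Hypothesis (uK : cancel u ui) (uiK : cancel ui u).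
Hypothesis (hdeg : forall i k : 'I_n, i <= k -> deg E (u k) <= deg E (u i)).
Variable (X' : nat -> {set 'I_N}).
Hypothesis (hX'disj : forall i j, i <= T -> j <= T -> i != j -> [disjoint X' i & X' j]).
Hypothesis (P1 : forall j, j <= T ->
          39 * #|Uset u s j| < 10 * #|X' j| /\ 10 * #|X' j| < 41 * #|Uset u s j|).
Hypothesis (hX'X : forall j, j <= T -> X' j \subset Xgood l f).
Hypothesis (P2 : forall j, j < T ->
          forall Xs : nat -> {set 'I_N},
          (forall i, i <= j -> Xs i \subset X' i) ->
          forall phi, Emb u E f s Xs j = Some phi ->
          9 * #|Lset u E f s phi j :&: X' j.+1| <= #|X' j.+1|).
Hypothesis (P3 : forall i j, i <= j -> j <= T ->
          5 * m * rij f X' i j <= #|Uset u s i| * #|Uset u s j| ^ 2).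

Lemma precE v w : prec u v w = (ui v < ui w).
Proof.
apply/existsP/idP => [[i /existsP[k /and3P[/eqP <- /eqP <- h]]]|h].
  by rewrite !uK.
by exists (ui v); apply/existsP; exists (ui w); rewrite !uiK !eqxx h.
Qed.

Lemma UsetE j v : (v \in Uset u s j) = inU s j (ui v).
Proof.
rewrite inE; apply/existsP/idP => [[i /andP[/eqP <- h]]|h]; first by rewrite uK.
by exists (ui v); rewrite uiK eqxx h.
Qed.

Lemma Ult_lt j v : v \in Ult u s j -> ui v < lo s j.
Proof.
move=> /bigcupP[i _]; rewrite UsetE inUE => /andP[_ h].
exact: leq_trans h (hi_le_lo s (ltn_ord i)).
Qed.

Lemma Ult_in j i v : i < j -> v \in Uset u s i -> v \in Ult u s j.
Proof. by move=> hij hv; apply/bigcupP; exists (Ordinal hij). Qed.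

Lemma XleP (Xs : nat -> {set 'I_N}) j x :
  reflect (exists2 i, i <= j & x \in Xs i) (x \in Xle Xs j).
Proof.
apply: (iffP bigcupP) => [[i _ h]|[i hi h]]; first by exists i => //; rewrite -ltnS.
by exists (Ordinal (hi : i < j.+1)).
Qed.

Lemma lev_ex v : exists2 j, j <= T & v \in Uset u s j.
Proof.
have := ltn_ord (ui v); rewrite {2}hnT => /inU_ex[j hj h].
by exists j => //; rewrite UsetE.
Qed.

Lemma hi_le_n j : j <= T -> hi s j <= n.
Proof. by move=> hj; rewrite hnT /hi leq_mul2l leq_pexp2l // orbT. Qed.

Lemma filter_enum_inU j : j <= T ->
  map (@nat_of_ord n) [seq i : 'I_n <- enum 'I_n | inU s j i] = iota (lo s j) (hi s j - lo s j).
Proof.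
move=> hj.
have -> : [seq i : 'I_n <- enum 'I_n | inU s j i] = [seq i : 'I_n <- enum 'I_n | preim (@nat_of_ord n) (inU s j) i] by [].
rewrite -filter_map val_enum_ord.
rewrite (eq_filter (a2 := fun k => (lo s j <= k) && (k < hi s j))); last by move=> k; rewrite /= inUE.
exact: filter_iota_int (lo_le_hi s j) (hi_le_n hj).
Qed.

Lemma card_Uset j : j <= T -> #|Uset u s j| = hi s j - lo s j.
Proof.
move=> hj.
have -> : Uset u s j = u @: [set k : 'I_n | inU s j k].
  apply/setP => v; rewrite UsetE; apply/idP/imsetP => [h|[k]].
    by exists (ui v); rewrite ?inE ?uiK.
  by rewrite inE => h ->; rewrite uK.
rewrite card_imset; last exact: can_inj uK.
rewrite -sum1dep_card -(big_mkord (fun k => inU s j k) (fun _ => 1)) sum1_count -size_filter.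
have := congr1 size (filter_enum_inU hj); rewrite size_map size_iota => <-.
rewrite -(size_map (@nat_of_ord n)) -filter_map val_enum_ord /index_iota subn0; congr size; exact: eq_filter.
Qed.


Definition dj (j : nat) (y : 'I_N) : nat :=
  #|[set x | [&& x \in X' j, y != x & ~~ [disjoint f [set y; x] & Xle X' j]]]|.
Definition Dl (j : nat) : nat :=
  if j is 0 then #|Uset u s 0| else \max_(v in Uset u s j) deg E v.

Definition Inv (Xs : nat -> {set 'I_N}) (phi : V -> option 'I_N) (c : nat) : Prop :=
  [/\ forall v, (phi v != None) = (ui v < c),
      forall v a j, phi v = Some a -> v \in Uset u s j -> a \in Xs j,
      forall v w a, phi v = Some a -> phi w = Some a -> v = w,
      forall v w a b j, E v w -> phi v = Some a -> phi w = Some b -> ui v < ui w ->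
         w \in Uset u s j -> [disjoint f [set a; b] & Xle Xs j] &
      forall v w z a b c j, E v w -> phi v = Some a -> phi w = Some b -> phi z = Some c ->
         z \in Uset u s j -> v \in Ult u s j -> w \in Ult u s j -> c \notin f [set a; b]].

Definition Bhyp (Xs : nat -> {set 'I_N}) (phi : V -> option 'I_N) (j : nat) : Prop :=
  forall x v w a b, x \in Xs j -> E v w -> v \in Ult u s j -> w \in Ult u s j ->
    phi v = Some a -> phi w = Some b -> x \notin f [set a; b].

Definition XsS (Xs : nat -> {set 'I_N}) : Prop :=
  (forall i, i <= T -> Xs i \subset X' i) /\
  (forall i j y, i <= j -> j <= T -> y \in Xs i -> dj j y * Dl j <= #|Uset u s j|).

Lemma exists_cand Xs phi j (k : 'I_n) : j <= T -> inU s j k -> XsS Xs ->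
  2 * #|Uset u s j| <= #|Xs j| -> Inv Xs phi k -> Bhyp Xs phi j ->
  exists x, (x \in Xs j) && cand u E f s Xs j phi (u k) x.
Proof.
move=> hj hk [hsub hheavy] hcnt [hN hI2 hI3 hI4 hI5] hB.
have hw : u k \in Uset u s j by rewrite UsetE uK.
case: (boolP [exists x, (x \in Xs j) && cand u E f s Xs j phi (u k) x]) => [/existsP//|hno].
exfalso.
pose A := \bigcup_(v in Uset u s j :\ u k) [set a | phi v == Some a].
pose Bad v := match phi v with
  | Some a => [set x | [&& x \in X' j, a != x & ~~ [disjoint f [set a; x] & Xle X' j]]]
  | None => set0 end.
pose NP := [set v | E v (u k) && (ui v < k)].
pose B := \bigcup_(v in NP) Bad v.
have inA : forall x v, x \in Xs j -> ui v < k -> phi v = Some x -> x \in A.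
  move=> x v hx hv hpv.
  have [i hiT hvi] := lev_ex v.
  have hxi := hI2 _ _ _ hpv hvi.
  have hij : i = j.
    apply/eqP; apply: contraT => hne.
    have := disjointFr (hX'disj hiT hj hne) (subsetP (hsub i hiT) x hxi).
    by rewrite (subsetP (hsub j hj) x hx).
  subst i.
  apply/bigcupP; exists v; last by rewrite inE hpv.
  rewrite in_setD1 hvi andbT; apply/eqP => hvk; move: hv; rewrite hvk uK ltnn.
  by [].
have sub : Xs j \subset A :|: B.
  apply/subsetP => x hx.
  have hc : ~~ cand u E f s Xs j phi (u k) x.
    by move: hno; rewrite negb_exists => /forallP /(_ x); rewrite hx.
  case: (boolP [forall v, prec u v (u k) ==> (phi v != Some x)]) => hA; last first.
    move: hA; rewrite negb_forall => /existsP[v]; rewrite negb_imply negbK precE uK.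
    by move=> /andP[hv /eqP hpv]; rewrite inE (inA x v hx hv hpv).
  case: (boolP [forall v, forall v', [&& E v v', v \in Ult u s j & v' \in Ult u s j] ==>
         match phi v, phi v' with
         | Some a, Some b => x \notin f [set a; b]
         | _, _ => true
         end]) => hB1; last first.
    move: hB1; rewrite negb_forall => /existsP[v]; rewrite negb_forall => /existsP[v'].
    rewrite negb_imply => /andP[/and3P[hE hv hv']].
    case hpv: (phi v) => [a|//]; case hpv': (phi v') => [b|//]; rewrite negbK => hxf.
    by have := hB x v v' a b hx hE hv hv' hpv hpv'; rewrite hxf.
  case: (boolP [forall v, (E v (u k) && prec u v (u k)) ==>
         match phi v with
         | Some a => [disjoint f [set a; x] & Xle Xs j]
         | None => true
         end]) => hC1; last first.
    move: hC1; rewrite negb_forall => /existsP[v]; rewrite negb_imply precE uK.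
    move=> /andP[/andP[hE hv]].
    case hpv: (phi v) => [a|//] hnd.
    case: (eqVneq a x) => [hax|hax].
      by rewrite inE (inA x v hx hv); rewrite ?hpv ?hax.
    rewrite inE; apply/orP; right; apply/bigcupP; exists v; first by rewrite inE hE hv.
    rewrite /Bad hpv inE hax (subsetP (hsub j hj) x hx) /=.
    apply: contra hnd => hd; apply: disjointWr hd.
    apply/subsetP => y /XleP[i hi hy]; apply/XleP; exists i => //.
    exact: (subsetP (hsub i (leq_trans hi hj)) y hy).
  by move: hc; rewrite /cand hA hB1 hC1.
have cA : #|A| <= #|Uset u s j| - 1.
  apply: leq_trans (card_bigcup_le _ _) _.
  apply: leq_trans (_ : \sum_(v in Uset u s j :\ u k) 1 <= _).
    apply: leq_sum => v _; case: (phi v) => [a|].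
      rewrite (_ : [set a0 | Some a == Some a0] = [set a]) ?cards1 //.
      by apply/setP => b; rewrite !inE; apply/eqP/eqP => [[->]|->].
    by rewrite (_ : [set a0 | None == Some a0] = set0) ?cards0 //; apply/setP => b; rewrite !inE.
  rewrite sum1_card; have := cardsD1 (u k) (Uset u s j); rewrite hw /=; lia.
have hBad : forall v, v \in NP -> #|Bad v| * Dl j <= #|Uset u s j|.
  move=> v; rewrite inE => /andP[_ hv]; rewrite /Bad.
  case hpv: (phi v) => [a|]; last by rewrite cards0.
  have [i hiT hvi] := lev_ex v.
  have hij : i <= j.
    apply: (inU_mono (s := s) (a := ui v) (b := k)); [by rewrite -UsetE | by [] | exact: ltnW].
  exact: hheavy i j a hij hj (hI2 _ _ _ hpv hvi).
have h1 : #|NP| <= deg E (u k).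
  apply: subset_leq_card; apply/subsetP => v; rewrite !inE => /andP[hE _].
  by rewrite hEsym.
have h2 : k < s -> #|NP| <= #|Uset u s 0|.
  move=> hks; apply: subset_leq_card; apply/subsetP => v.
  rewrite inE UsetE => /andP[_ hv] /=; lia.
have hNP : #|NP| <= Dl j.
  move: hk hw; rewrite /Dl; case: (j) => [|j'] hk' hw'; first exact: h2 hk'.
  by apply: leq_trans h1 _; apply: leq_bigmax_cond hw'.
have cB : #|B| <= #|Uset u s j|.
  apply: leq_trans (card_bigcup_le _ _) _.
  case: (posnP (Dl j)) => hD.
    have : #|NP| = 0 by lia.
    by move/eqP; rewrite cards_eq0 => /eqP ->; rewrite big_set0.
  rewrite -(leq_pmul2r hD) big_distrl /=.
  apply: leq_trans (_ : \sum_(v in NP) #|Uset u s j| <= _).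
    by apply: leq_sum => v hv; exact: hBad v hv.
  by rewrite sum_nat_const mulnC leq_mul2l hNP orbT.
have hU : 0 < #|Uset u s j| by apply/card_gt0P; exists (u k).
have := leq_trans (subset_leq_card sub) (leq_trans (leq_card_setU A B).1 (leq_add cA cB)).
move: hcnt hU; move: (#|Uset u s j|) (#|Xs j|) => a b; lia.
Qed.

Lemma step Xs phi j (k : 'I_n) : j <= T -> inU s j k -> XsS Xs ->
  2 * #|Uset u s j| <= #|Xs j| -> Inv Xs phi k -> Bhyp Xs phi j ->
  exists phi', emb_step u E f s Xs j (Some phi) k = Some phi' /\
    Inv Xs phi' k.+1 /\ Bhyp Xs phi' j /\ (forall v, phi v != None -> phi' v = phi v).
Proof.
move=> hj hk hXs hcnt hInv hB.
have [x hx] := exists_cand hj hk hXs hcnt hInv hB.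
move: hInv => [hN hI2 hI3 hI4 hI5].
have hkj : lo s j <= k by move: hk; rewrite inUE => /andP[].
have neq_of_lt : forall v, ui v < k -> v != u k.
  by move=> v hv; apply/eqP => hvk; move: hv; rewrite hvk uK ltnn.
have ult_ne : forall v, v \in Ult u s j -> v != u k.
  by move=> v /Ult_lt hv; apply: neq_of_lt; exact: leq_trans hv hkj.
have hwk : u k \in Uset u s j by rewrite UsetE uK.
rewrite /emb_step.
case Hl: [seq y <- enum 'I_N | (y \in Xs j) && cand u E f s Xs j phi (u k) y] => [|x0 rest].
  have : x \in [seq y <- enum 'I_N | (y \in Xs j) && cand u E f s Xs j phi (u k) y].
    by rewrite mem_filter hx mem_enum.
  by rewrite Hl.
have : x0 \in x0 :: rest := mem_head _ _.
rewrite -Hl mem_filter => /andP[/andP[hx0X hcand] _].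
move: hcand; rewrite /cand => /and3P[hA hB1 hC1].
pose phi' := fun v => if v == u k then Some x0 else phi v.
exists phi'; split; first by [].
have hpk : phi' (u k) = Some x0 by rewrite /phi' eqxx.
have hpo : forall v, v != u k -> phi' v = phi v by move=> v h; rewrite /phi' (negbTE h).
have hSome : forall v a, phi v = Some a -> ui v < k.
  by move=> v a h; rewrite -hN h.
have hlev : forall j0, u k \in Uset u s j0 -> j0 = j.
  by move=> j0; rewrite UsetE uK => h; exact: inU_uniq h hk.
split; last split.
- split.
  + move=> v; case: (eqVneq v (u k)) => [->|hv]; first by rewrite hpk uK ltnSn.
    rewrite hpo // hN ltnS.
    have hne : (ui v : nat) != k by apply: contra_neq hv => /val_inj <-; rewrite uiK.
    by rewrite [RHS]leq_eqVlt (negbTE hne).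
  + move=> v a j0; case: (eqVneq v (u k)) => [->|hv].
      by rewrite hpk => -[<-] /hlev ->.
    by rewrite hpo //; exact: hI2.
  + move=> v w a; case: (eqVneq v (u k)) => [->|hv]; case: (eqVneq w (u k)) => [->|hw] //.
    * rewrite hpk (hpo _ hw) => -[<-] hpw.
      move/forallP: hA => /(_ w); rewrite precE uK (hSome _ _ hpw) hpw /=.
      by rewrite eqxx.
    * rewrite hpk (hpo _ hv) => hpv -[ha].
      move/forallP: hA => /(_ v); rewrite precE uK (hSome _ _ hpv) hpv /= ha.
      by rewrite eqxx.
    * by rewrite (hpo _ hv) (hpo _ hw); exact: hI3.
  + move=> v w a b j0; case: (eqVneq v (u k)) => [->|hv]; case: (eqVneq w (u k)) => [->|hw] hE.
    * by rewrite uK ltnn.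
    * rewrite (hpo _ hw) => _ hpw; rewrite uK => hlt.
      by have := hSome _ _ hpw; rewrite ltnNge (ltnW hlt).
    * rewrite hpk (hpo _ hv) => hpv -[<-] _ /hlev ->.
      move/forallP: hC1 => /(_ v); rewrite hE precE uK (hSome _ _ hpv) hpv /=.
      by [].
    * by rewrite (hpo _ hv) (hpo _ hw); exact: hI4.
  + move=> v w z a b c j0 hE hpv hpw; case: (eqVneq z (u k)) => [->|hz].
      rewrite hpk => -[<-] /hlev -> hv hw.
      move: hpv hpw; rewrite (hpo _ (ult_ne _ hv)) (hpo _ (ult_ne _ hw)) => hpv hpw.
      move/forallP: hB1 => /(_ v) /forallP /(_ w); rewrite hE hv hw hpv hpw.
      by [].
    rewrite (hpo _ hz) => hpz hzj hv hw.
    have hzk := hSome _ _ hpz.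
    have hlz : lo s j0 <= ui z by move: hzj; rewrite UsetE inUE => /andP[].
    have hvne : v != u k.
      by apply/eqP => hvk; move: hv; rewrite hvk => /Ult_lt; rewrite uK => h; have := leq_ltn_trans (leq_trans h hlz) hzk; rewrite ltnNge leqnSn.
    have hwne : w != u k.
      by apply/eqP => hvk; move: hw; rewrite hvk => /Ult_lt; rewrite uK => h; have := leq_ltn_trans (leq_trans h hlz) hzk; rewrite ltnNge leqnSn.
    move: hpv hpw; rewrite (hpo _ hvne) (hpo _ hwne) => hpv hpw.
    exact: hI5 hE hpv hpw hpz hzj hv hw.
- move=> y v w a b hy hE hv hw.
  rewrite (hpo _ (ult_ne _ hv)) (hpo _ (ult_ne _ hw)).
  exact: hB y v w a b hy hE hv hw.
- move=> v hv; apply: hpo; apply: neq_of_lt.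
  by move: hv; rewrite hN.
Qed.

Lemma level Xs j phi c (p : seq 'I_n) : j <= T -> XsS Xs ->
  2 * #|Uset u s j| <= #|Xs j| -> lo s j <= c -> c <= hi s j ->
  map (@nat_of_ord n) p = iota c (hi s j - c) -> Inv Xs phi c -> Bhyp Xs phi j ->
  exists phi', foldl (emb_step u E f s Xs j) (Some phi) p = Some phi' /\
    Inv Xs phi' (hi s j) /\ Bhyp Xs phi' j.
Proof.
elim: p phi c => [|k p IH] phi c hj hXs hcnt hlo hhi hmap hInv hB.
  have hc : c = hi s j.
    by have := congr1 size hmap; rewrite size_iota /=; lia.
  by exists phi; rewrite -hc.
case e: (hi s j - c) hmap => [|len] hmap //; have /= [hkc hp] := hmap.
have hkU : inU s j k by rewrite inUE hkc hlo /=; lia.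
have hInv' : Inv Xs phi k by rewrite hkc.
have [phi1 [hst [hI1 [hB1 _]]]] := step hj hkU hXs hcnt hInv' hB.
suff [phi' H] : exists phi', foldl (emb_step u E f s Xs j) (emb_step u E f s Xs j (Some phi) k) p
   = Some phi' /\ Inv Xs phi' (hi s j) /\ Bhyp Xs phi' j by exists phi'.
rewrite hst.
apply: (IH phi1 k.+1) => //; first by lia.
  by lia.
by rewrite hp hkc; congr iota; lia.
Qed.

Lemma foldl_ext (S : eqType) (R : Type) (F1 F2 : R -> S -> R) z (r : seq S) :
  (forall st x, x \in r -> F1 st x = F2 st x) -> foldl F1 z r = foldl F2 z r.
Proof.
elim: r z => [//|x r IH] z h /=.
rewrite (h z x (mem_head _ _)); apply: IH => st y hy.
by apply: h; rewrite inE hy orbT.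
Qed.

Lemma Emb_ext (A B : nat -> {set 'I_N}) t :
  (forall i, i <= t -> A i = B i) -> Emb u E f s A t = Emb u E f s B t.
Proof.
move=> hAB; rewrite /Emb; apply: foldl_ext => // st j; rewrite mem_iota add0n ltnS => /andP[_ hj].
have eA : A j = B j by exact: hAB.
have eX : Xle A j = Xle B j.
  by apply: eq_bigr => i _; apply: hAB; apply: leq_trans hj; rewrite -ltnS.
have -> : emb_step u E f s A j = emb_step u E f s B j.
  by rewrite /emb_step /cand eA eX.
by [].
Qed.

Lemma EmbS Xs t : Emb u E f s Xs t.+1 =
  foldl (emb_step u E f s Xs t.+1) (Emb u E f s Xs t) [seq i : 'I_n <- enum 'I_n | inU s t.+1 i].
Proof.
by rewrite /Emb (_ : t.+2 = t.+1 + 1) 1?iotaD ?foldl_cat ?add0n // addn1.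
Qed.

Lemma Emb0 Xs : Emb u E f s Xs 0 =
  foldl (emb_step u E f s Xs 0) (Some (fun _ => None)) [seq i : 'I_n <- enum 'I_n | inU s 0 i].
Proof. by []. Qed.

Lemma run Xs : XsS Xs -> 2 * #|Uset u s 0| <= #|Xs 0| ->
  (forall j phi0, j < T -> Emb u E f s Xs j = Some phi0 ->
      Bhyp Xs phi0 j.+1 /\ 2 * #|Uset u s j.+1| <= #|Xs j.+1|) ->
  forall t, t <= T -> exists phi, Emb u E f s Xs t = Some phi /\ Inv Xs phi (hi s t).
Proof.
move=> hXs h0 HB; elim => [|t IH] ht.
  rewrite Emb0.
  have hI0 : Inv Xs (fun _ => None) 0 by split.
  have hB0 : Bhyp Xs (fun _ => None) 0 by [].
  have [phi [-> [hI _]]] := level (phi := fun _ => None) (c := 0) (leq0n T) hXs h0 (leqnn 0)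
      (leq0n _) (filter_enum_inU (leq0n T)) hI0 hB0.
  by exists phi.
have [phi [he hinv]] := IH (ltnW ht).
have [hB hc] := HB t phi ht he.
rewrite EmbS he.
have [phi' [-> [hI _]]] := level (c := lo s t.+1) ht hXs hc (leqnn _) (lo_le_hi _ _)
   (filter_enum_inU ht) hinv hB.
by exists phi'.
Qed.

Lemma sum_deg : \sum_v deg E v <= 2 * m.
Proof.
have -> : \sum_v deg E v = #|[set p : V * V | E p.1 p.2]| by rewrite card_pairs.
pose F := fun p : V * V => ([set p.1; p.2], enum_rank p.1 < enum_rank p.2).
have inj : {in [set p : V * V | E p.1 p.2] &, injective F}.
  move=> [a b] [c d]; rewrite !inE /= => hab hcd [hse hr].
  have hab' : a != b by apply: contraTneq hab => ->; rewrite hEirr.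
  have hcd' : c != d by apply: contraTneq hcd => ->; rewrite hEirr.
  have : a \in [set c; d] by rewrite -hse set21.
  have : b \in [set c; d] by rewrite -hse set22.
  move=> /set2P[hb|hb] /set2P[ha|ha].
  - by move: hab'; rewrite ha hb eqxx.
  - move: hr; rewrite ha hb => hr.
    have hne : (enum_rank d : nat) != enum_rank c.
      by apply: contra_neq hcd' => /val_inj/enum_rank_inj ->.
    by move: hr hne; case: (ltngtP (enum_rank d) (enum_rank c)).
  - by rewrite ha hb.
  - by move: hab'; rewrite ha hb eqxx.
rewrite -(card_in_imset inj).
apply: leq_trans (_ : #|setX (edges E) [set: bool]| <= _).
  apply: subset_leq_card; apply/subsetP => q /imsetP[p hp ->].
  rewrite in_setX in_setT andbT inE; apply/existsP; exists p.1; apply/existsP; exists p.2.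
  by move: hp; rewrite inE => ->; rewrite eqxx.
by rewrite cardsX cardsT card_bool hm mulnC.
Qed.

Lemma card_U0 : #|Uset u s 0| = s.
Proof. by rewrite card_Uset // /hi /lo expn0 muln1 subn0. Qed.

Lemma card_US j : j < T -> #|Uset u s j.+1| <= 2 * #|Uset u s j|.
Proof.
move=> hj; rewrite !card_Uset ?(ltnW hj) //.
case: j hj => [|j] hj; rewrite /hi /lo ?expnS ?expn0; nia.
Qed.

Lemma Dl_le j v : v \in Uset u s j -> Dl j.+1 <= deg E v.
Proof.
move=> hv; apply/bigmax_leqP => w hw.
have hvw : ui v <= ui w.
  rewrite leqNgt; apply/negP => hlt.
  have := inU_mono (s := s) (j := j.+1) (j' := j) (a := ui w) (b := ui v); rewrite -!UsetE => /(_ hw hv (ltnW hlt)).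
  by rewrite ltnn.
by have := hdeg hvw; rewrite !uiK.
Qed.

Lemma sum_lev v : \sum_(j < T) (if v \in Uset u s j then deg E v else 0) <= deg E v.
Proof.
have [j0 hj0 hv0] := lev_ex v.
case: (ltnP j0 T) => hlt.
  rewrite (bigD1 (Ordinal hlt)) //= hv0 big1 ?addn0 // => j hj.
  case: ifP => // hvj; move: hj; rewrite -(inj_eq val_inj) /=.
  by rewrite (inU_uniq (s := s) (a := ui v) (j := j) (j' := j0)) ?eqxx // -UsetE.
rewrite big1 // => j _; case: ifP => // hvj.
have := inU_uniq (s := s) (a := ui v) (j := j) (j' := j0); rewrite -!UsetE => /(_ hvj hv0) hjj.
by move: (ltn_ord j); rewrite hjj ltnNge hlt.
Qed.

Lemma sum_UD : \sum_(j < T.+1) #|Uset u s j| * Dl j <= 5 * m.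
Proof.
rewrite -(big_mkord xpredT (fun j => #|Uset u s j| * Dl j)) big_nat_recl // big_mkord.
have step1 : forall i : 'I_T, #|Uset u s i.+1| * Dl i.+1 <= 2 * \sum_(v in Uset u s i) deg E v.
  move=> i; apply: leq_trans (leq_mul (card_US (ltn_ord i)) (leqnn _)) _.
  rewrite -mulnA leq_mul2l /= -sum_nat_const; apply: leq_sum => v hv; exact: Dl_le hv.
have step2 : \sum_(i < T) \sum_(v in Uset u s i) deg E v <= \sum_v deg E v.
  rewrite (eq_bigr (fun i : 'I_T => \sum_v (if v \in Uset u s i then deg E v else 0))); last by move=> i _; rewrite big_mkcond.
  rewrite exchange_big /=; apply: leq_sum => v _; exact: sum_lev.
have S1 : \sum_(i < T) #|Uset u s i.+1| * Dl i.+1 <= 2 * \sum_(i < T) \sum_(v in Uset u s i) deg E v.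
  by rewrite big_distrr; apply: leq_sum => i _; exact: step1.
have := sum_deg; move: step2 S1; rewrite /Dl card_U0 hs.
move: (\sum_(i < T) _) (\sum_(i < T) _) (\sum_v _) => a b c; lia.
Qed.

Definition Hij i j := [set y in X' i | #|Uset u s j| < dj j y * Dl j].
Definition H i := [set y in X' i | [exists j : 'I_T.+1, (i <= j) && (#|Uset u s j| < dj j y * Dl j)]].

Lemma sum_dj i j : \sum_(y in X' i) dj j y <= rij f X' i j.
Proof.
rewrite /rij (card_pairs (fun x y => [&& x \in X' i, y \in X' j, x != y &
   ~~ [disjoint f [set x; y] & Xle X' j]])) big_mkcond /=.
apply: leq_sum => x _; case: ifP => hx //.
Qed.

Lemma UposT j : j <= T -> 0 < #|Uset u s j|.
Proof. by move=> hj; have [_ h] := P1 hj; rewrite lt0n; apply/eqP => h0; rewrite h0 in h. Qed.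

Lemma Hij_bound i j : i <= j -> j <= T ->
  5 * m * #|Hij i j| <= #|Uset u s i| * #|Uset u s j| * Dl j.
Proof.
move=> hij hj.
have hU := UposT hj.
have a : #|Hij i j| * #|Uset u s j| <= rij f X' i j * Dl j.
  rewrite -sum_nat_const.
  apply: leq_trans (_ : \sum_(y in Hij i j) dj j y * Dl j <= _).
    by apply: leq_sum => y; rewrite inE => /andP[_ /ltnW].
  apply: leq_trans (_ : \sum_(y in X' i) dj j y * Dl j <= _).
    rewrite [X in X <= _]big_mkcond [X in _ <= X]big_mkcond /=.
    apply: leq_sum => y _; case: ifP => //; rewrite inE => /andP[-> _] //.
  by rewrite -big_distrl leq_mul2r sum_dj orbT.
have P3' := P3 hij hj; rewrite -mulnn in P3'.
rewrite -(leq_pmul2r hU).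
have e1 := leq_mul (leqnn (5 * m)) a.
have e2 := leq_mul P3' (leqnn (Dl j)).
move: e1 e2; move: (#|Hij i j|) (#|Uset u s j|) (#|Uset u s i|) (rij f X' i j) (Dl j) => x y z w t.
nia.
Qed.

Lemma m_pos : 0 < m.
Proof. have := UposT (leq0n T); rewrite card_U0 hs => h; by rewrite muln_gt0 h. Qed.

Lemma H_bound i : i <= T -> #|H i| <= #|Uset u s i|.
Proof.
move=> hi.
have sub : H i \subset \bigcup_(j < T.+1 | i <= j) Hij i j.
  apply/subsetP => y; rewrite inE => /andP[hy /existsP[j /andP[hij hlt]]].
  by apply/bigcupP; exists j => //; rewrite inE hy hlt.
have c1 := leq_trans (subset_leq_card sub) (card_bigcup_le _ _).
have h5m : 0 < 5 * m by rewrite muln_gt0 m_pos.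
rewrite -(leq_pmul2l h5m).
apply: leq_trans (leq_mul (leqnn _) c1) _.
rewrite big_distrr /=.
apply: leq_trans (_ : \sum_(j < T.+1 | i <= j) #|Uset u s i| * (#|Uset u s j| * Dl j) <= _).
  apply: leq_sum => j hij; rewrite mulnA; exact: Hij_bound hij (ltn_ord j : j <= T).
apply: leq_trans (_ : \sum_(j < T.+1) #|Uset u s i| * (#|Uset u s j| * Dl j) <= _).
  rewrite [X in _ <= X](bigID (fun j : 'I_T.+1 => i <= j)) /=; exact: leq_addr.
rewrite -big_distrr /= mulnC leq_mul2r sum_UD orbT.
by [].
Qed.

Definition Lof (o : option (V -> option 'I_N)) j : {set 'I_N} :=
  if o is Some phi then Lset u E f s phi j else set0.

Fixpoint bX (k : nat) : nat -> {set 'I_N} :=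
  if k is k'.+1 then
    (fun i => if i == k'.+1 then X' i :\: H i :\: Lof (Emb u E f s (bX k') k') k' else bX k' i)
  else (fun i => if i == 0 then X' 0 :\: H 0 else set0).

Definition Xs := bX T.

Lemma bX_le k k' i : i <= k -> k <= k' -> bX k' i = bX k i.
Proof.
move=> hik; elim: k' => [|k' IH] hkk'.
  by have -> : k = 0 by lia.
case: (ltnP k k'.+1) => h; last by have -> : k = k'.+1 by lia.
rewrite /= ifN ?IH //; lia.
Qed.

Lemma Xs_eq i : i <= T -> Xs i = bX i i.
Proof. by move=> hi; rewrite /Xs (bX_le (leqnn i) hi). Qed.

Lemma Emb_Xs i : i <= T -> Emb u E f s Xs i = Emb u E f s (bX i) i.
Proof.
move=> hi; apply: Emb_ext => i' hi'.
by rewrite /Xs (bX_le hi' hi).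
Qed.

Lemma XsH i : i <= T -> Xs i \subset X' i :\: H i.
Proof.
move=> hi; rewrite Xs_eq //; case: i hi => [|i] hi /=; rewrite ?eqxx ?subsetDl //.
Qed.

Lemma XsS_Xs : XsS Xs.
Proof.
split.
  move=> i hi; apply: subset_trans (XsH hi) _; exact: subsetDl.
move=> i j y hij hj hy.
have := subsetP (XsH (leq_trans hij hj)) y hy; rewrite !inE => /andP[hyH hyX].
rewrite leqNgt; apply: contra hyH => hlt.
by rewrite hyX /=; apply/existsP; exists (Ordinal (hj : j < T.+1)); rewrite /= hij hlt.
Qed.

Lemma count0 : 2 * #|Uset u s 0| <= #|Xs 0|.
Proof.
rewrite Xs_eq // /= cardsD.
have h1 : #|X' 0 :&: H 0| <= #|H 0| by apply: subset_leq_card; exact: subsetIr.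
have h2 := H_bound (leq0n T).
have [h3 _] := P1 (leq0n T).
lia.
Qed.

Lemma HB j phi0 : j < T -> Emb u E f s Xs j = Some phi0 ->
  Bhyp Xs phi0 j.+1 /\ 2 * #|Uset u s j.+1| <= #|Xs j.+1|.
Proof.
move=> hj he.
have hXj : Xs j.+1 = X' j.+1 :\: H j.+1 :\: Lset u E f s phi0 j.
  by rewrite Xs_eq // /= eqxx -Emb_Xs ?(ltnW hj) // he.
split.
  move=> x v w a b hx hE hv hw hpv hpw.
  move: hx; rewrite hXj in_setD => /andP[hxL _].
  apply: contra hxL => hxf.
  apply/bigcupP; exists v; first by [].
  apply/bigcupP; exists w; first by rewrite hE.
  by rewrite hpv hpw.
rewrite hXj cardsD cardsD.
have h1 : #|X' j.+1 :&: H j.+1| <= #|H j.+1| by apply: subset_leq_card; exact: subsetIr.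
have h2 := H_bound hj.
have [h3 _] := P1 hj.
have h4 : #|(X' j.+1 :\: H j.+1) :&: Lset u E f s phi0 j| <= #|Lset u E f s phi0 j :&: X' j.+1|.
  apply: subset_leq_card; apply/subsetP => x; rewrite !inE => /andP[/andP[_ ->] ->].
  by [].
have hsub : forall i, i <= j -> Xs i \subset X' i.
  by move=> i hi; apply: XsS_Xs.1; apply: leq_trans hi (ltnW hj).
have h5 := P2 hj hsub he.
have h6 : #|X' j.+1 :&: H j.+1| <= #|X' j.+1| by apply: subset_leq_card; exact: subsetIl.
lia.
Qed.

Lemma main_sec :
  exists Xs : nat -> {set 'I_N},
    (forall j, j <= T -> Xs j \subset X' j) /\
    exists (phi : V -> option 'I_N) (g : V -> 'I_N),
      [/\ Emb u E f s Xs T = Some phi,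
          forall v, phi v = Some (g v),
          injective g,
          forall v, g v \in Xgood l f &
          forall v w, E v w -> [disjoint f [set g v; g w] & g @: [set: V]]].
Proof.
exists Xs; split; first exact: XsS_Xs.1.
have [phi [he [hN hI2 hI3 hI4 hI5]]] := run XsS_Xs count0 HB (leqnn T).
have hall : forall v, phi v != None by move=> v; rewrite hN /hi -hnT.
have hn0 : 0 < n by rewrite hnT muln_gt0 expn_gt0 /=; have := m_pos; rewrite hs muln_gt0 => /andP[->].
have [a0 _] : exists a0, phi (u (Ordinal hn0)) = Some a0.
  by case: (phi (u (Ordinal hn0))) (hall (u (Ordinal hn0))) => // a _; exists a.
pose g v := odflt a0 (phi v).
have hg : forall v, phi v = Some (g v).
  by move=> v; rewrite /g; case: (phi v) (hall v).
exists phi, g; split => //.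
- by move=> v w e; apply: (hI3 v w (g v)); [exact: hg | rewrite e; exact: hg].
- move=> v; have [j hj hv] := lev_ex v.
  have := hI2 _ _ _ (hg v) hv => hx.
  exact: (subsetP (hX'X hj)) _ (subsetP (XsS_Xs.1 j hj) _ hx).
have key : forall v w, E v w -> ui v < ui w -> [disjoint f [set g v; g w] & g @: [set: V]].
  move=> v w hE hlt.
  rewrite -setI_eq0; apply/eqP/setP => x; rewrite inE in_set0.
  apply/negbTE/negP => /andP[hxf /imsetP[z _ hz]]; subst x.
  have [j hj hwj] := lev_ex w.
  have [jz hjz hzj] := lev_ex z.
  case: (leqP jz j) => hle.
    have hd := hI4 v w (g v) (g w) j hE (hg v) (hg w) hlt hwj.
    have hzX : g z \in Xle Xs j by apply/XleP; exists jz => //; exact: hI2 _ _ _ (hg z) hzj.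
    by rewrite (disjointFr hd hxf) in hzX.
  have [jv hjv hvj] := lev_ex v.
  have hjvj : jv <= j.
    by apply: (inU_mono (s := s) (a := ui v) (b := ui w)); rewrite -?UsetE // ltnW.
  have hv' : v \in Ult u s jz := Ult_in (leq_ltn_trans hjvj hle) hvj.
  have hw' : w \in Ult u s jz := Ult_in hle hwj.
  by have := hI5 v w z (g v) (g w) (g z) jz hE (hg v) (hg w) (hg z) hzj hv' hw'; rewrite hxf.
move=> v w hE.
case: (ltngtP (ui v) (ui w)) => h.
- exact: key.
- by rewrite setUC; apply: key => //; rewrite hEsym.
- by move: hE; rewrite (can_inj uiK (val_inj h)) hEirr.
Qed.

End Main.

Theorem lemma2p2
  (l N : nat) (f : {set 'I_N} -> {set 'I_N})
  (hl : 1 <= l)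
  (hf : forall e : {set 'I_N}, #|e| = 2 -> #|f e| = l /\ [disjoint f e & e])
  (V : finType) (E : rel V) (hEsym : symmetric E) (hEirr : irreflexive E)
  (n m s T : nat)
  (hn : #|V| = n) (hm : #|edges E| = m) (hs : m = s * s)
  (hT : 1 <= T) (hnT : n = s * 2 ^ T)
  (hiso : 2 * #|[set v | deg E v == 0]| < n)
  (u : 'I_n -> V) (hu : bijective u)
  (hdeg : forall i k : 'I_n, i <= k -> deg E (u k) <= deg E (u i))
  (X' : nat -> {set 'I_N})
  (hX'X : forall j, j <= T -> X' j \subset Xgood l f)
  (hX'disj : forall i j, i <= T -> j <= T -> i != j -> [disjoint X' i & X' j])
  (P1 : forall j, j <= T ->
          39 * #|Uset u s j| < 10 * #|X' j| /\ 10 * #|X' j| < 41 * #|Uset u s j|)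
  (P2 : forall j, j < T ->
          forall Xs : nat -> {set 'I_N},
          (forall i, i <= j -> Xs i \subset X' i) ->
          forall phi, Emb u E f s Xs j = Some phi ->
          9 * #|Lset u E f s phi j :&: X' j.+1| <= #|X' j.+1|)
  (P3 : forall i j, i <= j -> j <= T ->
          5 * m * rij f X' i j <= #|Uset u s i| * #|Uset u s j| ^ 2) :
  exists Xs : nat -> {set 'I_N},
    (forall j, j <= T -> Xs j \subset X' j) /\
    exists (phi : V -> option 'I_N) (g : V -> 'I_N),
      [/\ Emb u E f s Xs T = Some phi,
          forall v, phi v = Some (g v),
          injective g,
          forall v, g v \in Xgood l f &
          forall v w, E v w -> [disjoint f [set g v; g w] & g @: [set: V]]].
Proof.
case: hu => ui uK uiK.
exact: (main_sec hEsym hEirr hm hs hnT uK uiK hdeg hX'disj P1 hX'X P2 P3).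
Qed.
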